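(* Let $x$ be a stable g-matching with $x\ne x^{\max}$, let $w\in W$, and let $(c,a)$ be a legal $w$-pair under $x$. Let $d\in (U_F^+(x)\cap E_w)\setminus\{a\}$ be interesting for $w$ under $z:=x_w+\mathbf 1^a-\mathbf 1^c$. Then $(c,d)$ is a legal $w$-pair under $x$ and $x_w+\mathbf 1^d-\mathbf 1^c\succ_w z$.
   Context: Let $G=(V,E)$ be a finite bipartite graph with color classes $W$ and $F$; the edge joining $w\in W$ and $f\in F$ is written $wf$. Let $b\in\mathbb Z_+^E$ be capacities. For $v\in V$, $E_v$ is the set of edges at $v$, $\mathcal B_v=\{z\in\mathbb Z_+^{E_v}: z\le b|_{E_v}\}$, $\mathbf 1^e$ the unit vector of $e$, $|z|=\sum_e|z(e)|$, $\wedge,\vee$ componentwise min/max. Each $v$ has a choice function $C_v:\mathcal B_v\to\mathcal B_v$ with $C_v(z)\le z$ and, for all $z,z'$: (A1) $z\ge z'\ge C_v(z)\Rightarrow C_v(z')=C_v(z)$; (A2) $z\ge z'\Rightarrow C_v(z)\wedge z'\le C_v(z')$; (A3) $z\ge z'\Rightarrow|C_v(z)|\ge|C_v(z')|$. $z$ is acceptable if $C_v(z)=z$; for distinct acceptable $z,z'$, $z'\prec_v z$ (i.e. $z\succ_v z'$) iff $C_v(z\vee z')=z$. $x_v$ = restriction of $x$ to $E_v$. A g-matching is $x\in\mathbb Z_+^E$, $x\le b$, each $x_v$ acceptable; $x\prec_F y$ (distinct) iff $x_f\preceq_f y_f$ for all $f\in F$. $e\in E_v$ is interesting for $v$ under acceptable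 $z$ if some $z'\in\mathcal B_v$ has $z'(e)>z(e)$, $z'(e')=z(e')$ for $e'\neq e$, $C_v(z')(e)>z(e)$; $e=wf$ is interesting for $v\in\{w,f\}$ under a g-matching $x$ if so under $x_v$, and blocks $x$ if interesting for both endpoints; stable g-matchings (no blocking edge) form a finite lattice under $\prec_F$ with maximum $x^{\max}$. For stable $x$: $U_F^+(x)$ = edges $wf$ interesting for $f$ under $x$; $U_F^-(x)$ = edges $wf$ with $x(wf)>0$ not interesting for $f$ under $x$. For $w\in W$, a legal $w$-pair under $x$ is $(c,a)$ with $c\in U_F^-(x)\cap E_w$, $a\in U_F^+(x)\cap E_w$ and $C_w(x_w+\mathbf 1^a-\mathbf 1^c)=x_w+\mathbf 1^a-\mathbf 1^c$. *)

(* Defs.v *)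
From mathcomp Require Import all_boot.
Set Implicit Arguments. Unset Strict Implicit. Unset Printing Implicit Defensive.

Section GMatch.
(* Bipartite graph: color classes W, F; edge set E; edge e joins ew e and ef e. *)
Variables (W F E : finType) (ew : E -> W) (ef : E -> F).
Variable b : E -> nat.

Definition vertex := (W + F)%type.
Definition vec := {ffun E -> nat}.

Definition incident (v : vertex) (e : E) : bool :=
  match v with inl w => ew e == w | inr f => ef e == f end.

Definition inB (v : vertex) (z : vec) : Prop :=
  forall e, z e <= b e /\ (~~ incident v e -> z e = 0).

Definition vle (z z' : vec) : Prop := forall e, z e <= z' e.
Definition vmin (z z' : vec) : vec := [ffun e => minn (z e) (z' e)].
Definition vmax (z z' : vec) : vec := [ffun e => maxn (z e) (z' e)].
Definition vsize (z : vec) : nat := \sum_(e : E) z e.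

Definition restr (v : vertex) (x : vec) : vec :=
  [ffun e => if incident v e then x e else 0].

Definition unitv (a : E) : vec := [ffun e => nat_of_bool (e == a)].

Definition swapv (z : vec) (a c : E) : vec :=
  [ffun e => z e + nat_of_bool (e == a) - nat_of_bool (e == c)].

Variable C : vertex -> vec -> vec.

Definition choice_fun (v : vertex) : Prop :=
  (forall z, inB v z -> vle (C v z) z) /\
  (forall z z', inB v z -> inB v z' ->
      vle z' z -> vle (C v z) z' -> C v z' = C v z) /\
  (forall z z', inB v z -> inB v z' ->
      vle z' z -> vle (vmin (C v z) z') (C v z')) /\
  (forall z z', inB v z -> inB v z' ->
      vle z' z -> vsize (C v z') <= vsize (C v z)).

Definition acceptable (v : vertex) (z : vec) : Prop := inB v z /\ C v z = z.

(* z' \prec_v z (z \succ_v z') for distinct acceptable z, z' *)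
Definition prec (v : vertex) (z' z : vec) : Prop :=
  acceptable v z /\ acceptable v z' /\ z <> z' /\ C v (vmax z z') = z.

Definition preceq (v : vertex) (z' z : vec) : Prop := z' = z \/ prec v z' z.

Definition gmatching (x : vec) : Prop :=
  (forall e, x e <= b e) /\ (forall v, acceptable v (restr v x)).

Definition interesting (v : vertex) (z : vec) (e : E) : Prop :=
  incident v e /\
  exists z' : vec, inB v z' /\ z e < z' e /\
    (forall e', e' != e -> z' e' = z e') /\ z e < C v z' e.

Definition interesting_x (v : vertex) (x : vec) (e : E) : Prop :=
  interesting v (restr v x) e.

Definition blocks (x : vec) (e : E) : Prop :=
  interesting_x (inl (ew e)) x e /\ interesting_x (inr (ef e)) x e.

Definition stable (x : vec) : Prop :=
  gmatching x /\ forall e, ~ blocks x e.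

Definition precF (x y : vec) : Prop :=
  x <> y /\ forall f : F, preceq (inr f) (restr (inr f) x) (restr (inr f) y).
Definition preceqF (x y : vec) : Prop := x = y \/ precF x y.

Definition is_xmax (xm : vec) : Prop :=
  stable xm /\ forall y, stable y -> preceqF y xm.

Definition UFplus (x : vec) (e : E) : Prop := interesting_x (inr (ef e)) x e.
Definition UFminus (x : vec) (e : E) : Prop :=
  0 < x e /\ ~ interesting_x (inr (ef e)) x e.

Definition legal_pair (x : vec) (w : W) (c a : E) : Prop :=
  UFminus x c /\ ew c = w /\ UFplus x a /\ ew a = w /\
  C (inl w) (swapv (restr (inl w) x) a c) = swapv (restr (inl w) x) a c.

End GMatch.

(* Main.v *)
Require Import Defs.
From mathcomp Require Import all_boot.
From mathcomp Require Import zify.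

Ltac unlet := repeat match goal with | [ x := _ |- _ ] => progress unfold x end.

Ltac rwf := rewrite ?eqxx /=;
  repeat match goal with H : (_ == _) = false |- _ => progress rewrite H end; rewrite /=.

Ltac clp := repeat match goal with
  | H : ?T |- _ => lazymatch T with
      | (_ == _) = false => fail
      | _ => lazymatch type of T with Prop => clear H end end
  end.

Ltac clall := repeat match goal with
  | H : ?T |- _ => lazymatch type of T with Prop => clear H end
  end.

Ltac pw e a c d H1 H2 H3 :=
  move: (H1) (H2) (H3); clp;
  unlet; unfold swapv, vmax, vmin; rewrite ?ffunE /=;
  (have [Ea|/negbTE ?] := eqVneq e a;
   [match goal with H : e = a |- _ => try (exfalso; move/eqP: H; by rwf); try subst e end; rwf; clall; first [done | lia] |]);
  (have [Ec|/negbTE ?] := eqVneq e c;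
   [match goal with H : e = c |- _ => try (exfalso; move/eqP: H; by rwf); try subst e end; rwf; clall; first [done | lia] |]);
  (have [Ed|/negbTE ?] := eqVneq e d;
   [match goal with H : e = d |- _ => try (exfalso; move/eqP: H; by rwf); try subst e end; rwf; clall; first [done | lia] |]);
  rwf; clall; first [done | lia].

Theorem lemma3p3 (W F E : finType) (ew : E -> W) (ef : E -> F) (b : E -> nat)
  (C : vertex W F -> vec E -> vec E)
  (Hsimple : injective (fun e => (ew e, ef e)))
  (HC : forall v, choice_fun ew ef b C v)
  (xmax : vec E) (Hxmax : is_xmax ew ef b C xmax)
  (x : vec E) (Hx : stable ew ef b C x) (Hne : x <> xmax)
  (w : W) (c a d : E)
  (Hleg : legal_pair ew ef b C x w c a)
  (HdU : UFplus ew ef b C x d) (Hdw : ew d = w) (Hda : d <> a)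
  (Hdint : interesting ew ef b C (inl w) (swapv (restr ew ef (inl w) x) a c) d) :
  legal_pair ew ef b C x w c d /\
  prec ew ef b C (inl w) (swapv (restr ew ef (inl w) x) a c)
                         (swapv (restr ew ef (inl w) x) d c).
Proof.
have [A0 [A1 [A2 A3]]] := HC (inl w).
move: (Hleg) => [[Hc0 Hcn] [Hcw [HaU [Haw HCzA]]]].
have [[Hxb Hacc] Hnb] := Hx.
have bnd : forall e, UFplus ew ef b C x e -> x e < b e.
  move=> e [_ [y [Hy [Hlt _]]]]; have [Hyb _] := Hy e.
  move: Hlt; rewrite ffunE /= eqxx => Hlt; exact: leq_trans Hlt Hyb.
have Hab := bnd a HaU. have Hdb := bnd d HdU.
have nint : forall e, UFplus ew ef b C x e -> ew e = w ->
    ~ interesting ew ef b C (inl w) (restr ew ef (inl w) x) e.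
  move=> e He Hew Hi; apply: (Hnb e); split => //.
  by rewrite /interesting_x Hew.
have NIa := nint a HaU Haw. have NId := nint d HdU Hdw.
have Xacc := Hacc (inl w).
have ac : (a == c) = false.
  apply/negbTE/eqP => E1; apply: Hcn; by rewrite -E1.
have dc : (d == c) = false.
  apply/negbTE/eqP => E1; apply: Hcn; by rewrite -E1.
have da : (d == a) = false by apply/negbTE/eqP.
have ca : (c == a) = false by rewrite eq_sym.
have cd : (c == d) = false by rewrite eq_sym.
have ad : (a == d) = false by rewrite eq_sym.
have Xe : forall e, restr ew ef (inl w) x e = if ew e == w then x e else 0.
  by move=> e; rewrite ffunE.
set X := restr ew ef (inl w) x in Xe NIa NId Xacc HCzA Hdint *.
have XA : X a = x a by rewrite Xe Haw eqxx.
have XD : X d = x d by rewrite Xe Hdw eqxx.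
have XC : X c = x c by rewrite Xe Hcw eqxx.
have Xb : forall e, X e <= b e.
  by move=> e; rewrite Xe; case: ifP => // _; exact: Hxb.
have X0 : forall e, ew e != w -> X e = 0.
  by move=> e /negbTE H; rewrite Xe H.
have XE : restr ew ef (inl w) x = X by [].
clearbody X.
have addC : forall e, ew e = w -> X e < b e ->
    ~ interesting ew ef b C (inl w) X e ->
    C (inl w) [ffun e' => X e' + (e' == e)] = X.
  move=> e Hew Heb NI.
  have inBY : inB ew ef b (inl w) [ffun e' => X e' + (e' == e)].
    move=> e'; rewrite ffunE /=; split.
      by case: eqVneq => [->|_]; rewrite ?addn1 ?addn0 ?Xb.
    move=> Hn; rewrite X0 //; case: eqVneq => // E1; move: Hn; by rewrite E1 Hew eqxx.
  have le0 := A0 _ inBY.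
  have leX : vle (C (inl w) [ffun e' => X e' + (e' == e)]) X.
    move=> e'; case: (eqVneq e' e) => [->|ne].
      rewrite leqNgt; apply/negP => Hlt; apply: NI; split; first by rewrite /= Hew.
      exists [ffun e' => X e' + (e' == e)]; split => //.
      rewrite ffunE eqxx addn1 ltnSn; split => //; split => //.
      by move=> e2 /negbTE H; rewrite ffunE H addn0.
    by have := le0 e'; rewrite ffunE (negbTE ne) addn0.
  have inBX : inB ew ef b (inl w) X by case: Xacc.
  have leY : vle X [ffun e' => X e' + (e' == e)] by move=> e'; rewrite ffunE; lia.
  have := A1 _ _ inBY inBX leY leX => <-; by case: Xacc.
have XAb : X a < b a by rewrite XA.
have XDb : X d < b d by rewrite XD.
have CXa := addC a Haw XAb NIa.
have CXd := addC d Hdw XDb NId.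
have Xc1 : 0 < X c by rewrite XC.
have mkB : forall f : vec E, (forall e, f e <= b e) ->
    (forall e, e != a -> e != c -> e != d -> f e = X e) -> inB ew ef b (inl w) f.
  move=> f Hb Ho e; split => // /= He.
  have na : e != a by apply: contraNneq He => ->; rewrite Haw.
  have nc : e != c by apply: contraNneq He => ->; rewrite Hcw.
  have nd : e != d by apply: contraNneq He => ->; rewrite Hdw.
  by rewrite Ho // X0.
have inBX : inB ew ef b (inl w) X by case: Xacc.
pose zA := swapv X a c. pose zD := swapv X d c.
pose Xa : vec E := [ffun e => X e + (e == a)].
pose Xd : vec E := [ffun e => X e + (e == d)].
pose u : vec E := [ffun e => X e + (e == a) + (e == d)].
pose v := vmax zD zA.
have inBXa : inB ew ef b (inl w) Xa.
  apply: mkB => e; [move: (Xb e) | ]; pw e a c d XAb XDb Xc1.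
have inBu : inB ew ef b (inl w) u.
  apply: mkB => e; [move: (Xb e) | ]; pw e a c d XAb XDb Xc1.
have inBXd : inB ew ef b (inl w) Xd.
  apply: mkB => e; [move: (Xb e) | ]; pw e a c d XAb XDb Xc1.
have inBzA : inB ew ef b (inl w) zA.
  apply: mkB => e; [move: (Xb e) | ]; pw e a c d XAb XDb Xc1.
have inBzD : inB ew ef b (inl w) zD.
  apply: mkB => e; [move: (Xb e) | ]; pw e a c d XAb XDb Xc1.
have inBv : inB ew ef b (inl w) v.
  apply: mkB => e; [move: (Xb e) | ]; pw e a c d XAb XDb Xc1.
have le1 := A0 _ inBu.
have h2a := A2 u Xa inBu inBXa ltac:(move=> e; pw e a c d XAb XDb Xc1).
have h2d := A2 u Xd inBu inBXd ltac:(move=> e; pw e a c d XAb XDb Xc1).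
rewrite CXa in h2a. rewrite CXd in h2d.
have leUX : vle (C (inl w) u) X.
  move=> e; move: (le1 e) (h2a e) (h2d e); pw e a c d XAb XDb Xc1.
have CU : C (inl w) u = X.
  by rewrite -(A1 u X inBu inBX ltac:(move=> e; pw e a c d XAb XDb Xc1) leUX); case: Xacc.
case: Hdint => _ [y [inBy [ylt [yeq yC]]]].
have vY : vle v y.
  move=> e; have [Ed|ne] := eqVneq e d.
    subst e; move: ylt; pw d a c d XAb XDb Xc1.
  rewrite (yeq e ne); move: ne; pw e a c d XAb XDb Xc1.
have vU : vle v u by move=> e; pw e a c d XAb XDb Xc1.
have h2y := A2 y v inBy inBv vY.
have h2u := A2 u v inBu inBv vU.
rewrite CU in h2u.
have le0v := A0 v inBv.
have s3 := A3 u v inBu inBv vU.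
rewrite CU in s3.
have lower : vle zD (C (inl w) v).
  move=> e; have [Ed|ne] := eqVneq e d.
    subst e; move: (h2y d) yC; pw d a c d XAb XDb Xc1.
  move: ne (h2u e); pw e a c d XAb XDb Xc1.
have sz : vsize v = (vsize X).+1.
  have H : \sum_(e : E) (v e + (e == c)) = \sum_(e : E) (X e + (e == a) + (e == d)).
    by apply: eq_bigr => e _; pw e a c d XAb XDb Xc1.
  have one : forall a0 : E, \sum_(e : E) (e == a0) = 1.
    move=> a0; rewrite (bigD1 a0) //= eqxx big1 // => e /negbTE -> //.
  rewrite !big_split /= !one in H.
  rewrite /vsize; lia.
have CvzD : C (inl w) v = zD.
  have [Hle|Hlt] := leqP (C (inl w) v a) (X a).
    apply/ffunP => e; move: (le0v e) (lower e) Hle; pw e a c d XAb XDb Xc1.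
  have Cvv : C (inl w) v = v.
    apply/ffunP => e; move: (le0v e) (lower e) Hlt; pw e a c d XAb XDb Xc1.
  by move: s3; rewrite Cvv sz ltnn.
have CzD : C (inl w) zD = zD.
  rewrite -{2}CvzD -(A1 v zD inBv inBzD _ _) //.
    by move=> e; pw e a c d XAb XDb Xc1.
  by rewrite CvzD => e.
split.
  rewrite /legal_pair XE.
  split; first by split.
  split; first by [].
  split; first by [].
  split; first by [].
  exact: CzD.
split; first by split.
split; first by split.
split; last exact: CvzD.
move/ffunP/(_ a).
unlet; unfold swapv; rewrite ?ffunE /= eqxx ad ac /=; lia.
Qed.
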